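(* Let $G$ be a connected graph of minimum degree at least three and let $(A,B)$ be a partition of $V(G)$ with $A\neq\emptyset$ and $B\neq\emptyset$. Let $C$ be any cycle in $G$. Then, unless $G$ is bipartite with bipartition $(A,B)$ (i.e. every edge of $G$ has one end in $A$ and the other in $B$), for every integer $\ell$ with $1\leq \ell<|V(C)|$ there is an $A$-$B$ path of length $\ell$ in $G$.
   Context: Graphs are finite and simple. An $A$-$B$ path is a path with one end in $A$ and the other end in $B$. The length of a path is its number of edges. *)

(* Defs.v *)
From mathcomp Require Import all_boot.
Set Implicit Arguments. Unset Strict Implicit. Unset Printing Implicit Defensive.

Definition simple_graph (T : finType) (e : rel T) : Prop :=
  symmetric e /\ irreflexive e.

Definition connected_graph (T : finType) (e : rel T) : Prop :=
  forall x y : T, connect e x y.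

Definition min_degree_ge (T : finType) (e : rel T) (k : nat) : Prop :=
  forall x : T, k <= #|[set y | e x y]|.

Definition is_cycle (T : finType) (e : rel T) (c : seq T) : Prop :=
  [/\ 3 <= size c, uniq c & cycle e c].

(* A path x :: p (vertices x, p_1, ..., p_k) of length size p:
   distinct vertices, consecutive ones adjacent. *)
Definition is_path (T : finType) (e : rel T) (x : T) (p : seq T) : Prop :=
  uniq (x :: p) /\ path e x p.

Definition AB_path (T : finType) (e : rel T) (A B : {set T})
  (x : T) (p : seq T) : Prop :=
  is_path e x p /\
  ((x \in A /\ last x p \in B) \/ (x \in B /\ last x p \in A)).

Definition bipartite_with (T : finType) (e : rel T) (A B : {set T}) : Prop :=
  forall x y : T, e x y ->
    (x \in A /\ y \in B) \/ (x \in B /\ y \in A).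

(* Main.v *)
Require Import Defs.
From mathcomp Require Import all_boot.
From Stdlib Require Import Classical.
From mathcomp Require Import zify.
Set Implicit Arguments. Unset Strict Implicit. Unset Printing Implicit Defensive.

Definition cyc (T : Type) (e : rel T) (n : nat) (v : nat -> T) :=
  [/\ forall k, e (v k) (v k.+1), forall k, v (k + n) = v k &
      forall a b, a < n -> b < n -> v a = v b -> a = b].

Section CycBasics.
Variables (T : Type) (e : rel T) (n : nat) (v : nat -> T).
Hypothesis esym : symmetric e.
Hypothesis Hc : cyc e n v.
Hypothesis n0 : 0 < n.

Lemma vmod k : v k = v (k %% n).
Proof.
case: Hc => _ H2 _.
rewrite {1}(divn_eq k n).
elim: (k %/ n) => [|q IH]; first by rewrite mul0n add0n.
by rewrite mulSnr addnAC H2.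
Qed.

Lemma vinj a b : v a = v b -> a %% n = b %% n.
Proof.
case: Hc => _ _ H3 E.
by apply: H3; rewrite ?ltn_pmod // -!vmod.
Qed.

Lemma shift_cyc i : cyc e n (fun k => v (i + k)).
Proof.
case: Hc => H1 H2 H3; split.
- by move=> k; rewrite addnS.
- by move=> k; rewrite addnA H2.
- move=> a b ha hb /vinj /eqP; rewrite eqn_modDl !modn_small // => /eqP.
  done.
Qed.

Definition rv k := v (n - k %% n).

Lemma rev_cyc : cyc e n rv.
Proof.
case: Hc => H1 H2 H3; rewrite /rv; split.
- move=> k.
  have hk : k %% n < n by rewrite ltn_pmod.
  case: (ltnP (k %% n).+1 n) => h.
  + have -> : k.+1 %% n = (k %% n).+1.
      by rewrite -addn1 -modnDml addn1 modn_small.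
    have -> : n - k %% n = (n - (k %% n).+1).+1 by lia.
    by rewrite esym.
  + have e1 : k %% n = n.-1 by lia.
    have -> : k.+1 %% n = 0.
      rewrite -addn1 -modnDml e1 addn1 prednK //; exact: modnn.
    rewrite e1 subn0.
    have vn : v n = v 0 by rewrite -{1}(add0n n) H2.
    rewrite vn.
    have -> : n - n.-1 = 1 by lia.
    by rewrite esym H1.
- by move=> k; rewrite modnDr.
- have vn : v n = v 0 by rewrite -{1}(add0n n) H2.
  move=> a b ha hb; rewrite !modn_small // => E.
  case: a ha E => [|a] ha; case: b hb => [|b] hb //.
  + rewrite subn0 vn => /H3; lia.
  + rewrite subn0 vn => /H3; lia.
  + move/H3; lia.
Qed.

End CycBasics.

Unset Implicit Arguments.
Definition Hl {T : finType} (e : rel T) (A : {set T}) (l : nat) :=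
  forall f : nat -> T, (forall t, t < l -> e (f t) (f t.+1)) ->
    (forall a b, a <= l -> b <= l -> f a = f b -> a = b) ->
    (f 0 \in A) = (f l \in A).
Set Implicit Arguments.

Section CycLemmas.
Variables (T : finType) (e : rel T) (A : {set T}) (l n : nat) (v : nat -> T).
Hypothesis esym : symmetric e.
Hypothesis Hc : cyc e n v.
Unset Implicit Arguments.
Hypothesis H : Hl e A l.
Set Implicit Arguments.
Hypothesis l0 : 0 < l.
Hypothesis ln : l < n.

Let n0 : 0 < n. Proof. exact: leq_ltn_trans ln. Qed.

Lemma via_idx (f : nat -> T) (idx : nat -> nat) :
  (forall t, t <= l -> f t = v (idx t)) -> (forall t, t <= l -> idx t < n) ->
  (forall a b, a <= l -> b <= l -> idx a = idx b -> a = b) ->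
  forall a b, a <= l -> b <= l -> f a = f b -> a = b.
Proof.
case: Hc => _ _ H3 E1 E2 E3 a b ha hb.
rewrite E1 // E1 // => /H3 h; apply: E3 => //; apply: h; exact: E2.
Qed.

Lemma vn : v n = v 0.
Proof. by case: Hc => _ H2 _; rewrite -{1}(add0n n) H2. Qed.

Lemma arc k : (v k \in A) = (v (k + l) \in A).
Proof.
have [H1 _ H3] := shift_cyc Hc n0 k.
have := H (fun t => v (k + t)); rewrite addn0; apply => //.
move=> a b ha hb; apply: H3; exact: leq_ltn_trans ln.
Qed.

Lemma arc_last : (v n.-1 \in A) = (v l.-1 \in A).
Proof.
case: Hc => _ H2 _.
rewrite arc; have -> : n.-1 + l = l.-1 + n by lia.
by rewrite H2.
Qed.

Lemma L2 w : (forall t, t < l -> w <> v t) -> e (v 0) w ->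
  (w \in A) = (v n.-1 \in A).
Proof.
case: Hc => H1 H2 H3 Hw ew.
rewrite arc_last.
have := H (fun t => if t is t'.+1 then v t' else w).
rewrite -(prednK l0) /=; apply.
- by case=> [|t] ht //=; rewrite esym.
- case=> [|a] [|b] ha hb //=.
  + move=> E; exfalso; apply: (Hw b); [lia | done].
  + move=> E; exfalso; apply: (Hw a); [lia | done].
  + move/H3 => -> //; lia.
Qed.

Lemma L1 s : e (v 0) (v s) -> 0 < s <= l -> (v 1 \in A) = (v s \in A).
Proof.
case: Hc => H1 H2 H3 es /andP [s0 sl].
pose idx t := if t < s then t.+1 else if t == s then 0 else n - (t - s).
have key : (v (idx 0) \in A) = (v (idx l) \in A).
  apply: (H (fun t => v (idx t))).
  - move=> t tl; rewrite /idx.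
    case: (ltngtP t.+1 s) => h1.
    + exact: H1.
    + case: (ltngtP t s) => h2; first lia.
        have -> : n - (t - s) = (n - (t.+1 - s)).+1 by lia.
        by rewrite esym.
      subst t; rewrite esym.
      have -> : n - (s.+1 - s) = n.-1 by lia.
      by rewrite -vn -{2}(prednK n0).
    + by rewrite h1 esym.
  - apply: via_idx => //.
    + move=> t tl; rewrite /idx; case: ifP => h; [lia | case: ifP => hh; lia].
    + have E t : (t < s /\ idx t = t.+1) \/ (t = s /\ idx t = 0) \/
                 (s < t /\ idx t = n - (t - s)).
        rewrite /idx; case: (ltngtP t s) => h; [left|right;right|right;left]; by [].
      move=> a b ha hb.
      case: (E a) => [[? ->]|[[? ->]|[? ->]]]; case: (E b) => [[? ->]|[[? ->]|[? ->]]]; lia.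
move: key; rewrite /idx s0.
case: (ltngtP l s) => h; first lia.
- move=> ->; rewrite arc; have -> : n - (l - s) + l = s + n by lia.
  by rewrite H2.
- subst s => ->.
  by rewrite arc add0n.
Qed.


Lemma L3 s : e (v 0) (v s) -> 1 < s -> s + l <= n ->
  (v 1 \in A) = (v n.-1 \in A).
Proof.
case: Hc => H1 H2 H3 es s1 sl.
pose idx (x t : nat) := if t == 0 then x else if t == 1 then 0 else s + t - 2.
have E x t : (t = 0 /\ idx x t = x) \/ (t = 1 /\ idx x t = 0) \/
             (1 < t /\ idx x t = s + t - 2).
  rewrite /idx; case: t => [|[|t]] /=; [left|right;left|right;right]; by [].
have key x : 0 < x < n -> e (v x) (v 0) -> (x < s) || (s + l - 2 < x) ->
    (v x \in A) = (v (idx x l) \in A).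
  move=> /andP [x0 xn] ex xs.
  apply: (H (fun t => v (idx x t))).
  - case=> [|[|t]] tl //=.
    + by rewrite /idx /= addnK.
    + by rewrite /idx /=; have -> : s + t.+3 - 2 = (s + t.+2 - 2).+1 by lia.
  - apply: via_idx => //.
    + move=> t tl; case: (E x t) => [[? ->]|[[? ->]|[? ->]]]; lia.
    + move=> a b ha hb.
      case: (E x a) => [[? ->]|[[? ->]|[? ->]]]; case: (E x b) => [[? ->]|[[? ->]|[? ->]]]; lia.
have n1 : 1 < n by lia.
rewrite (key 1) ?(key n.-1).
all: first [lia | by rewrite esym H1 | by rewrite -vn -{2}(prednK n0) H1 |
  (rewrite /idx; case: (l) l0 => [|[|ll]] //) ].
Qed.

End CycLemmas.

Section CycNbr.
Variables (T : finType) (e : rel T) (A : {set T}) (l n : nat) (v : nat -> T).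
Hypothesis esym : symmetric e.
Hypothesis eirr : irreflexive e.
Hypothesis Hc : cyc e n v.
Unset Implicit Arguments.
Hypothesis H : Hl e A l.
Set Implicit Arguments.
Hypothesis l0 : 0 < l.
Hypothesis ln : l < n.

Let n0 : 0 < n. Proof. exact: leq_ltn_trans ln. Qed.

Lemma rv_val s : 0 < s <= n -> rv n v (n - s) = v s.
Proof.
move=> /andP [s0 sn]; rewrite /rv.
case: (ltngtP s n) => h.
- by rewrite modn_small; [congr v; lia | lia].
- lia.
- by subst s; rewrite subnn mod0n subn0.
Qed.

Lemma rv0 : rv n v 0 = v 0.
Proof. by rewrite /rv mod0n subn0 (vn Hc). Qed.

Lemma nbr0 w : e (v 0) w -> w <> v 1 -> w <> v n.-1 ->
  (w \in A) = (v 1 \in A) /\ (w \in A) = (v n.-1 \in A).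
Proof.
move=> ew w1 wn.
have Hr := rev_cyc esym Hc n0.
have r1 : rv n v 1 = v n.-1 by rewrite -(rv_val (s := n.-1)); [congr rv; lia | lia].
have rn : rv n v n.-1 = v 1 by rewrite -(rv_val (s := 1)); [congr rv; lia | lia].
case: Hc => H1 H2 H3.
case: (classic (exists s, s < n /\ w = v s)) => [[s [sn ws]] | nw].
- subst w.
  have s0 : s <> 0 by move=> E; subst s; rewrite eirr in ew.
  have s1 : s <> 1 by move=> E; subst s.
  have s2 : s <> n.-1 by move=> E; subst s.
  have ers : e (rv n v 0) (rv n v (n - s)) by rewrite rv0 rv_val //; lia.
  case: (leqP l s) => ls.
  + have E2 : (v s \in A) = (v n.-1 \in A).
      apply: (L2 esym Hc H l0 ln) => // t tl /H3 E; lia.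
    rewrite E2; split => //.
    have := L3 esym Hr H l0 ln ers.
    by rewrite r1 rn => ->; [|lia|lia].
  + have E1 := L1 esym Hc H l0 ln ew.
    rewrite -E1; last lia.
    case: (leqP (s + l) n) => sl.
    * split => //; apply: (L3 esym Hc H l0 ln ew) => //; lia.
    * split => //.
      have := L1 esym Hr H l0 ln ers.
      rewrite r1 rv_val; last lia.
      by move=> ->; [rewrite E1 //; lia | lia].
- have nw' : forall k, w <> v k.
    move=> k E; apply: nw; exists (k %% n); split; first by rewrite ltn_pmod.
    by rewrite E (vmod Hc).
  split.
  + rewrite -rn; apply: (L2 esym Hr H l0 ln).
    * move=> t _; rewrite /rv; exact: nw'.
    * by rewrite rv0.
  + apply: (L2 esym Hc H l0 ln) => // t _; exact: nw'.
Qed.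

End CycNbr.

Lemma last_iota m k : last m (iota m.+1 k) = m + k.
Proof. elim: k m => [|k IH] m /=; first by rewrite addn0. by rewrite IH addnS. Qed.

Lemma path_iota (T : Type) (e : rel T) (f : nat -> T) m k :
  (forall t, m <= t < m + k -> e (f t) (f t.+1)) -> path e (f m) (map f (iota m.+1 k)).
Proof.
elim: k m => [|k IH] m Hf //=.
apply/andP; split; first by apply: Hf; lia.
apply: IH => t ht; apply: Hf; lia.
Qed.

Lemma fun_path (T : finType) (e : rel T) (f : nat -> T) l :
  (forall t, t < l -> e (f t) (f t.+1)) ->
  (forall a b, a <= l -> b <= l -> f a = f b -> a = b) ->
  [/\ is_path e (f 0) (map f (iota 1 l)), last (f 0) (map f (iota 1 l)) = f l
    & size (map f (iota 1 l)) = l].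
Proof.
move=> Ha Hi; split.
- split.
  + have -> : f 0 :: map f (iota 1 l) = map f (iota 0 l.+1) by [].
    rewrite map_inj_in_uniq ?iota_uniq // => a b; rewrite !mem_iota => ha hb.
    apply: Hi; lia.
  + apply: path_iota => t ht; apply: Ha; lia.
- by rewrite last_map last_iota.
- by rewrite size_map size_iota.
Qed.

Lemma mkH (T : finType) (e : rel T) (A B : {set T}) l :
  A :&: B = set0 -> A :|: B = [set: T] ->
  ~ (exists (x : T) (p : seq T), AB_path e A B x p /\ size p = l) -> Hl e A l.
Proof.
move=> AB0 ABT nex f Ha Hi.
have [Hp Hl Hs] := fun_path Ha Hi.
have inB y : y \notin A -> y \in B.
  move=> yA; have : y \in A :|: B by rewrite ABT inE.
  by rewrite inE (negbTE yA).
apply/idP/idP => h; apply/negPn/negP => h'; apply: nex;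
  exists (f 0), (map f (iota 1 l)); split => //; split => //; rewrite Hl.
- by left; split => //; apply: inB.
- by right; split => //; apply: inB.
Qed.

Lemma seq_cyc (T : finType) (e : rel T) (x0 : T) (c' : seq T) :
  uniq (x0 :: c') -> cycle e (x0 :: c') ->
  cyc e (size (x0 :: c')) (fun k => nth x0 (x0 :: c') (k %% size (x0 :: c'))).
Proof.
set c := x0 :: c'; set n := size c => cu cc.
have n0 : 0 < n by [].
have nE : n = (size c').+1 by [].
have step r : r < n -> e (nth x0 c r) (nth x0 c (r.+1 %% n)).
  move=> rn; move: cc; rewrite /cycle /= => /(pathP x0) /(_ r).
  rewrite size_rcons => /(_ rn).
  have -> : nth x0 (x0 :: rcons c' x0) r = nth x0 c r.
    case: r rn => [|r] rn //=; rewrite nth_rcons; case: ifP => //; lia.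
  rewrite nth_rcons /n /=; case: ifP => h.
  - by rewrite modn_small.
  - have -> : r = size c' by lia.
    by rewrite eqxx modnn.
split.
- move=> k; have := step (k %% n) (ltn_pmod k n0).
  by rewrite -[(k %% n).+1]addn1 modnDml addn1.
- by move=> k; rewrite modnDr.
- move=> a b ha hb; rewrite !modn_small // => /eqP; rewrite nth_uniq //.
  by move/eqP.
Qed.

Lemma deg3 (T : finType) (e : rel T) x y1 y2 :
  3 <= #|[set y | e x y]| -> exists w, [/\ e x w, w <> y1 & w <> y2].
Proof.
move=> h; apply: NNPP => nw.
have : [set y | e x y] \subset [set y1; y2].
  apply/subsetP => y; rewrite inE => exy; rewrite !inE.
  apply/negPn/negP; rewrite negb_or => /andP [/eqP n1 /eqP n2].
  by apply: nw; exists y.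
move/subset_leq_card; rewrite cards2.
case: (y1 != y2) => /=; lia.
Qed.


Lemma main_lemma (T : finType) (e : rel T) (A : {set T}) (l n : nat) (v : nat -> T) (g : bool)
  (Hc : cyc e n v) (n0 : 0 < n) (H : Hl e A l) (l0 : 0 < l) (ln : l < n)
  (CE : forall i w, e (v i) w -> ((v i \in A) != (w \in A)) = g) :
  let bad x y := ((x \in A) != (y \in A)) != g in
  forall m x (r : nat -> T) i,
    (forall t, t < m -> e (r t) (r t.+1)) ->
    (forall a b, a <= m -> b <= m -> r a = r b -> a = b) ->
    r m = v i -> e x (r 0) -> bad x (r 0) ->
    (forall t, t <= m -> x <> r t) -> False.
Proof.
move=> bad.
case: (Hc) => H1 H2 H3.
  elim/ltn_ind => m IH x r i Ha Hi Hm ex bx Hx.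
case: (classic (exists t k, t < m /\ r t = v k)) => [[t [k [tm rt]]]|nC].
  apply: (IH t tm x r k) => //.
  - move=> u ut; apply: Ha; lia.
  - move=> a' b' ha hb; apply: Hi; lia.
  - move=> u ut; apply: Hx; lia.
case: (classic (exists t, t < m /\ bad (r t) (r t.+1))) => [[t [tm bt]]|nB].
  apply: (IH (m - t.+1) _ (r t) (fun u => r (t.+1 + u)) i).
  - lia.
  - move=> u um; rewrite addnS; apply: Ha; lia.
  - move=> a' b' ha hb E.
    suff : t.+1 + a' = t.+1 + b' by lia.
    by apply: (Hi _ _ _ _ E); lia.
  - by rewrite (_ : t.+1 + (m - t.+1) = m) //; lia.
  - by rewrite addn0; apply: Ha.
  - by rewrite addn0.
  - move=> u um E.
    suff : t = t.+1 + u by lia.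
    by apply: (Hi _ _ _ _ E); lia.
case: (classic (exists k, x = v k)) => [[k xk]|nX].
  subst x; move: bx; rewrite /bad CE //.
  by rewrite eqxx.
pose F t := if t == 0 then x else if t <= m.+1 then r t.-1 else v (i + (t - m.+1)).
have FE t : (t = 0 /\ F t = x) \/ (0 < t <= m.+1 /\ F t = r t.-1) \/
            (m.+1 < t /\ F t = v (i + (t - m.+1))).
  rewrite /F; case: t => [|t]; [by left|right] => /=.
  case: ifP => h; [left|right]; split => //; lia.
have Fa t : t <= l -> e (F t) (F t.+1).
  move=> tl.
  case: (FE t) => [[t0 ->]|[[tr ->]|[tv ->]]];
    case: (FE t.+1) => [[t0' ->]|[[tr' ->]|[tv' ->]]]; try lia.
  - by subst t.
  - have := Ha t.-1; rewrite prednK //; [apply; lia | lia].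
  - have tm : t = m.+1 by lia.
    subst t; rewrite /= Hm (_ : m.+2 - m.+1 = 1) ?addn1 //; lia.
  - by rewrite (_ : t.+1 - m.+1 = (t - m.+1).+1) ?addnS //; lia.
have Hs := shift_cyc Hc n0 i.
case: Hs => _ _ S3.
have Fi a b : a <= l.+1 -> b <= l.+1 -> F a = F b -> a = b.
  move=> ha hb.
  case: (FE a) => [[a0 ->]|[[ar ->]|[av ->]]];
    case: (FE b) => [[b0 ->]|[[br ->]|[bv ->]]] => E; try lia.
  - exfalso; apply: (Hx b.-1); [lia | done].
  - exfalso; apply: nX; eexists; exact: E.
  - exfalso; apply: (Hx a.-1); [lia | done].
  - suff : a.-1 = b.-1 by lia.
    by apply: Hi E; lia.
  - case: (ltnP a.-1 m) => am.
    + exfalso; apply: nC; do 2 eexists; split; [exact: am | exact: E].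
    + have am' : a.-1 = m by lia.
      rewrite am' Hm -{1}(addn0 i) in E.
      have := S3 _ _ _ _ E; lia.
  - exfalso; apply: nX; eexists; symmetry; exact: E.
  - case: (ltnP b.-1 m) => bm.
    + exfalso; apply: nC; do 2 eexists; split; [exact: bm | symmetry; exact: E].
    + have bm' : b.-1 = m by lia.
      rewrite bm' Hm -{2}(addn0 i) in E.
      have := S3 _ _ _ _ E; lia.
  - suff : a - m.+1 = b - m.+1 by lia.
    by apply: S3 E; lia.
have E1 : (F 0 \in A) = (F l \in A).
  apply: (H (fun t => F t)).
  - move=> t tl; apply: Fa; lia.
  - move=> a' b' ha hb; apply: Fi; lia.
have E2 : (F 1 \in A) = (F l.+1 \in A).
  apply: (H (fun t => F t.+1)).
  - move=> t tl; apply: Fa; lia.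
  - move=> a' b' ha hb E; have : a'.+1 = b'.+1 by apply: Fi => //; lia.
    by case.
have Gd : ((F l \in A) != (F l.+1 \in A)) = g.
  case: (leqP l m) => lm.
  - have := FE l; have := FE l.+1.
    move=> [[? _]|[[? ->]|[? _]]]; try lia.
    move=> [[? _]|[[? ->]|[? _]]]; try lia.
    apply: NNPP => ng; apply: nB; exists l.-1; split; first lia.
    rewrite /bad prednK //; apply/negP => /eqP h; apply: ng; exact: h.
  - have [k Fk] : exists k, F l = v k.
      case: (FE l) => [[? _]|[[? ->]|[? ->]]]; try lia.
      + by exists i; rewrite -Hm; congr r; lia.
      + by eexists.
    by rewrite Fk; apply: CE; rewrite -Fk; apply: Fa.
have F0 : F 0 = x by [].
have F1 : F 1 = r 0 by rewrite /F /=; case: (m).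
rewrite F0 in E1; rewrite F1 in E2.
by move: bx; rewrite /bad E1 E2 Gd eqxx.
Qed.


Lemma start_lemma (T : finType) (e : rel T) (bad : rel T) (v0 : T) (a b : T) (p' : seq T)
  (esym : symmetric e) (eirr : irreflexive e) (bsym : forall x y, bad x y = bad y x)
  (eab : e a b) (bab : bad a b) (pp' : path e a p') (up' : uniq (a :: p'))
  (lp' : v0 = last a p')
  (main : forall m x (r : nat -> T), (forall t, t < m -> e (r t) (r t.+1)) ->
     (forall a b, a <= m -> b <= m -> r a = r b -> a = b) -> r m = v0 ->
     e x (r 0) -> bad x (r 0) -> (forall t, t <= m -> x <> r t) -> False) : False.
Proof.
pose q := a :: p'.
have qm : nth a q (size p') = v0 by rewrite lp' /q (last_nth a).
have qadj t : t < size p' -> e (nth a q t) (nth a q t.+1).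
  by move=> tp; move/(pathP a): pp' => /(_ t tp).
have qinj x y : x <= size p' -> y <= size p' -> nth a q x = nth a q y -> x = y.
  by move=> hx hy /eqP; rewrite nth_uniq // => /eqP.
case: (boolP (b \in q)) => bq.
- pose t0 := index b q.
  have t0s : t0 <= size p' by rewrite -ltnS; have := index_mem b q; rewrite bq /q /=.
  have qb : nth a q t0 = b by rewrite nth_index.
  have t00 : 0 < t0.
    rewrite lt0n; apply/negP => /eqP t0E; move: qb; rewrite t0E /= => ab.
    by subst b; rewrite eirr in eab.
  apply: (main (size p' - t0) a (fun u => nth a q (t0 + u))).
  + move=> u um; rewrite addnS; apply: qadj; lia.
  + move=> x y hx hy E; suff : t0 + x = t0 + y by lia.
    by apply: qinj E; lia.
  + by rewrite (_ : t0 + (size p' - t0) = size p') //; lia.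
  + by rewrite addn0 qb.
  + by rewrite addn0 qb.
  + move=> u um E; suff : 0 = t0 + u by lia.
    by apply: qinj; [lia | lia | exact: E].
- apply: (main (size p') b (fun u => nth a q u)).
  + exact: qadj.
  + exact: qinj.
  + exact: qm.
  + by rewrite /= esym.
  + by rewrite /= bsym.
  + move=> t tp E; move: bq; rewrite E mem_nth //.
Qed.


Theorem lemma3p2 (T : finType) (e : rel T) (A B : {set T}) (c : seq T) :
  simple_graph e ->
  connected_graph e ->
  min_degree_ge e 3 ->
  A :&: B = set0 -> A :|: B = [set: T] ->
  A != set0 -> B != set0 ->
  is_cycle e c ->
  ~ bipartite_with e A B ->
  forall l : nat, 1 <= l < size c ->
    exists (x : T) (p : seq T), AB_path e A B x p /\ size p = l.
Proof.
move=> [esym eirr] conn deg AB0 ABT An Bn [c3 cu cc] nbip l /andP [l0 lc].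
apply: NNPP => nex.
have H : Hl e A l := mkH AB0 ABT nex.
case: c c3 cu cc lc => [//|x0 c'] c3 cu cc lc.
pose n := size (x0 :: c').
pose v := fun k => nth x0 (x0 :: c') (k %% size (x0 :: c')).
have Hc : cyc e n v := seq_cyc cu cc.
have n0 : 0 < n by rewrite /n; lia.
have ln : l < n by [].
clearbody v n.
case: (Hc) => H1 H2 H3.
have inB y : y \notin A -> y \in B.
  move=> yA; have : y \in A :|: B by rewrite ABT inE.
  by rewrite inE (negbTE yA).
have notA y : y \in B -> y \notin A.
  move=> yB; apply/negP => yA.
  have : y \in A :&: B by rewrite inE yA yB.
  by rewrite AB0 inE.
have C1 i : (v (i + 1) \in A) = (v (i + n.-1) \in A).
  have [w [ew w1 w2]] := deg3 (v (i + 1)) (v (i + n.-1)) (deg (v i)).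
  have Hs := shift_cyc Hc n0 i.
  have := nbr0 esym eirr Hs H l0 ln (w := w).
  rewrite /= addn0 => /(_ ew w1 w2) [<- <-] //.
have C2 i w : e (v i) w -> (w \in A) = (v i.+1 \in A).
  move=> ew; case: (classic (w = v i.+1)) => [->//|w1].
  case: (classic (w = v (i + n.-1))) => [->|w2]; first by rewrite -C1 addn1.
  have Hs := shift_cyc Hc n0 i.
  have := nbr0 esym eirr Hs H l0 ln (w := w).
  rewrite /= addn0 addn1 => /(_ ew w1 w2) [-> _] //.
pose g := (v 0 \in A) != (v 1 \in A).
have Cg i : ((v i \in A) != (v i.+1 \in A)) = g.
  elim: i => [//|i IH]; rewrite -IH.
  have E := C1 i.+1; rewrite addn1 in E.
  have E' : i.+1 + n.-1 = i + n by lia.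
  rewrite E' H2 in E; rewrite E.
  by case: (v i \in A); case: (v i.+1 \in A).
have CE i w : e (v i) w -> ((v i \in A) != (w \in A)) = g.
  by move=> /C2 ->; apply: Cg.
pose bad x y := ((x \in A) != (y \in A)) != g.
have main := main_lemma Hc n0 H l0 ln CE.
rewrite -/bad in main.
have [a [b [eab bab]]] : exists a b, e a b /\ bad a b.
  apply: NNPP => nb.
  have allg x y : e x y -> ((x \in A) != (y \in A)) = g.
    move=> exy; apply: NNPP => ng; apply: nb; exists x, y; split => //.
    by apply/negP => /eqP h; apply: ng.
  case gE : g in allg.
  - apply: nbip => x y /allg.
    case: (boolP (x \in A)) => xA; case: (boolP (y \in A)) => yA //= _.
    + by left; split => //; apply: inB.
    + by right; split => //; apply: inB.
  - have cl : closed e (mem A).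
      move=> x y /allg E.
      have E' : (x \in A) = (y \in A) by move: E; case: (x \in A); case: (y \in A).
      exact: E'.
    case/set0Pn: An => a aA; case/set0Pn: Bn => b bB.
    have E := closed_connect cl (conn a b).
    have E' : (a \in A) = (b \in A) by exact: E.
    by move: E'; rewrite aA (negbTE (notA _ bB)).
have bsym x y : bad x y = bad y x.
  by rewrite /bad; case: (x \in A); case: (y \in A).
have [p pa lp] := connectP (conn a (v 0)).
move: lp; case: (shortenP pa) => p' pp' up' _ lp'.
apply: (start_lemma (bad := bad) esym eirr bsym eab bab pp' up' lp').
move=> m x r; exact: main m x r 0.
Qed.
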